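(* Let $K=\operatorname{cone}\{e_1,\dots,e_m\}\subset\mathbb{R}^m$ be a simplicial cone and $L$ a proper cone such that $K$ is an $L$-isotone projection set. Then there exists an index set $I\subset\{1,\dots,m\}$, with complement $I^c$, such that $\langle e_i,e_j\rangle\ge0$ for all $i,j\in I$, $\langle e_k,e_\ell\rangle\ge0$ for all $k,\ell\in I^c$, and $\langle e_i,e_k\rangle\le0$ for all $i\in I$, $k\in I^c$.
   Context: $\mathbb{R}^m$ carries the standard inner product. A simplicial cone is $\operatorname{cone}\{e_1,\dots,e_m\}=\{\sum t^ie_i:t^i\ge0\}$ with $e_1,\dots,e_m$ linearly independent. A proper cone is a closed convex cone $L$ that is pointed ($L\cap(-L)=\{0\}$) and generating ($L-L=\mathbb{R}^m$). $x\le_L y$ means $y-x\in L$. $K$ is an $L$-isotone projection set if $x\le_L y$ implies $P_Kx\le_L P_Ky$, where $P_K$ is the metric projection onto $K$. *)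

(* Defs.v *)
From HB Require Import structures.
From mathcomp Require Import all_boot all_order all_algebra.
From mathcomp Require Import reals.
Set Implicit Arguments. Unset Strict Implicit. Unset Printing Implicit Defensive.
Import Order.TTheory GRing.Theory Num.Theory.
Local Open Scope ring_scope.

Section Defs.
Variables (R : realType) (m : nat).
Notation vec := 'rV[R]_m.

Definition dot (x y : vec) : R := \sum_(i < m) x ord0 i * y ord0 i.

Definition dist2 (x y : vec) : R := dot (x - y) (x - y).

Definition lin_indep (e : 'I_m -> vec) : Prop :=
  forall t : 'I_m -> R, \sum_(i < m) t i *: e i = 0 -> forall i, t i = 0.

Definition cone_gen (e : 'I_m -> vec) : vec -> Prop :=
  fun x => exists t : 'I_m -> R, (forall i, 0 <= t i) /\ x = \sum_(i < m) t i *: e i.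

Definition closed_set (L : vec -> Prop) : Prop :=
  forall x, (forall eps : R, 0 < eps -> exists y, L y /\ dist2 x y < eps) -> L x.

Definition convex_cone (L : vec -> Prop) : Prop :=
  [/\ L 0,
      forall x y, L x -> L y -> L (x + y) &
      forall (t : R) x, 0 <= t -> L x -> L (t *: x)].

Definition pointed (L : vec -> Prop) : Prop :=
  forall x, L x -> L (- x) -> x = 0.

Definition generating (L : vec -> Prop) : Prop :=
  forall z, exists x y, [/\ L x, L y & z = x - y].

Definition proper_cone (L : vec -> Prop) : Prop :=
  [/\ closed_set L, convex_cone L, pointed L & generating L].

Definition leL (L : vec -> Prop) (x y : vec) : Prop := L (y - x).

Definition is_proj (K : vec -> Prop) (x p : vec) : Prop :=
  K p /\ forall y, K y -> dist2 x p <= dist2 x y.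

Definition isotone_projection_set (L K : vec -> Prop) : Prop :=
  forall x y p q, leL L x y -> is_proj K x p -> is_proj K y q -> leL L p q.

End Defs.

(* Main.v *)
Require Import Defs.
From HB Require Import structures.
From mathcomp Require Import all_boot all_order all_algebra.
From mathcomp Require Import reals boolp.
From mathcomp Require Import lra.
Set Implicit Arguments. Unset Strict Implicit. Unset Printing Implicit Defensive.
Import Order.TTheory GRing.Theory Num.Theory.
Local Open Scope ring_scope.

Section Aux.
Variables (R : realType) (m : nat).
Notation vec := 'rV[R]_m.

Lemma dotC (x y : vec) : dot x y = dot y x.
Proof. by apply: eq_bigr => i _; rewrite mulrC. Qed.

Lemma dotDl (x y z : vec) : dot (x + y) z = dot x z + dot y z.
Proof. by rewrite /dot -big_split /=; apply: eq_bigr => i _; rewrite !mxE mulrDl. Qed.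

Lemma dotZl a (x z : vec) : dot (a *: x) z = a * dot x z.
Proof. by rewrite /dot mulr_sumr; apply: eq_bigr => i _; rewrite !mxE mulrA. Qed.

Lemma dotNl (x z : vec) : dot (- x) z = - dot x z.
Proof. by rewrite -scaleN1r dotZl mulN1r. Qed.

Lemma dotBl (x y z : vec) : dot (x - y) z = dot x z - dot y z.
Proof. by rewrite dotDl dotNl. Qed.

Lemma dot0l (z : vec) : dot 0 z = 0.
Proof. by rewrite -(scale0r 0) dotZl mul0r. Qed.

Lemma dot_suml (t : 'I_m -> R) (f : 'I_m -> vec) z :
  dot (\sum_(i < m) t i *: f i) z = \sum_(i < m) t i * dot (f i) z.
Proof.
rewrite (big_morph (fun x => dot x z) (fun x y => dotDl x y z) (dot0l z)).
by apply: eq_bigr => i _; rewrite dotZl.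
Qed.

Lemma dot_ge0 (x : vec) : 0 <= dot x x.
Proof. by apply: sumr_ge0 => i _; rewrite -expr2 sqr_ge0. Qed.

Lemma dot_eq0 (x : vec) : dot x x = 0 -> x = 0.
Proof.
move=> /eqP; rewrite psumr_eq0 => [/allP H|i _]; last by rewrite -expr2 sqr_ge0.
apply/rowP => j; rewrite mxE.
have := H j (mem_index_enum j); rewrite -expr2 sqrf_eq0 => /eqP.
by rewrite (ord1 ord0).
Qed.

Variable (e : 'I_m -> vec).

Lemma proj_ray k a u : 0 <= a -> dot u (e k) = 0 -> (forall i, dot u (e i) <= 0) ->
  is_proj (cone_gen e) (a *: e k + u) (a *: e k).
Proof.
move=> a0 uk ui; split.
  exists (fun i => if i == k then a else 0); split.
    by move=> i; case: eqP.
  rewrite (bigD1 k) //= eqxx big1 ?addr0 // => i /negbTE ->; by rewrite scale0r.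
move=> y [t [t0 ->]].
rewrite /dist2.
have -> : a *: e k + u - a *: e k = u by rewrite addrC addKr.
set d := a *: e k - \sum_(i < m) t i *: e i.
have -> : a *: e k + u - \sum_(i < m) t i *: e i = u + d by rewrite /d addrA (addrC u).
have hdu : 0 <= dot d u.
  rewrite /d dotBl dotZl dot_suml dotC uk mulr0 sub0r oppr_ge0.
  by apply: sumr_le0 => i _; rewrite dotC mulr_ge0_le0.
have hdd := dot_ge0 d.
clearbody d.
rewrite dotDl ![dot _ (u + d)]dotC !dotDl (dotC u d).
lra.
Qed.

Lemma exists_w k : lin_indep e ->
  exists w : vec, dot w (e k) = 0 /\ forall i, i != k -> dot w (e i) = -1.
Proof.
move=> li.
pose E : 'M[R]_m := \matrix_(i, j) e i ord0 j.
have rf : row_free E.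
  apply: inj_row_free => v vE.
  have H : \sum_(i < m) v ord0 i *: e i = 0.
    apply/rowP => j; have := congr1 (fun M : 'M[R]_(1, m) => M ord0 j) vE.
    rewrite /= !mxE summxE => h; apply: etrans h.
    by apply: eq_bigr => i _; rewrite !mxE.
  by apply/rowP => i; rewrite mxE; apply: li _ H i.
have uT : E^T \in unitmx by rewrite unitmx_tr -row_free_unit.
pose b : vec := \row_i (if i == k then 0 else -1).
exists (b *m invmx E^T).
have key i : dot (b *m invmx E^T) (e i) = b ord0 i.
  rewrite -{2}(mulmxKV uT b) mxE.
  by apply: eq_bigr => j _; rewrite !mxE.
by split => [|i /negbTE ik]; rewrite key mxE ?eqxx ?ik.
Qed.

Lemma ek_neq0 k : lin_indep e -> e k != 0.
Proof.
move=> li; apply/negP => /eqP ek.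
have H : \sum_(i < m) (if i == k then 1 else 0) *: e i = 0.
  rewrite (bigD1 k) //= eqxx scale1r ek add0r big1 // => i /negbTE ->.
  by rewrite scale0r.
by have := li _ H k; rewrite eqxx => /eqP; rewrite oner_eq0.
Qed.

Lemma nk_gt0 k : lin_indep e -> 0 < dot (e k) (e k).
Proof.
move=> li; rewrite lt_def dot_ge0 andbT; apply/eqP => /dot_eq0 /eqP.
by apply/negP; apply: ek_neq0.
Qed.

Variable L : vec -> Prop.

Lemma key k v : lin_indep e -> isotone_projection_set L (cone_gen e) -> L v ->
  L ((dot v (e k) / dot (e k) (e k)) *: e k).
Proof.
move=> li iso Lv.
have n0 := nk_gt0 k li.
set c := dot v (e k) / dot (e k) (e k).
set vp := v - c *: e k.
have vpk : dot vp (e k) = 0.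
  by rewrite /vp dotBl dotZl /c mulfVK ?subrr // (gt_eqF n0).
have [w [wk wi]] := exists_w k li.
pose B := \sum_(i < m) `|dot vp (e i)|.
have B0 : 0 <= B by apply: sumr_ge0.
have Bi i : dot vp (e i) <= B.
  apply: le_trans (ler_norm _) _.
  by rewrite /B (bigD1 i) //= lerDl sumr_ge0.
pose A := `|c|.
have hc := ler_norm (- c); rewrite normrN -/A in hc.
have A0 : 0 <= A by apply: normr_ge0.
have P0 : is_proj (cone_gen e) (A *: e k + B *: w) (A *: e k).
  apply: proj_ray => // [|i]; first by rewrite dotZl wk mulr0.
  rewrite dotZl; case: (eqVneq i k) => [->|ik]; first by rewrite wk mulr0.
  by rewrite wi // mulrN1 oppr_le0.
have P1 : is_proj (cone_gen e) ((A + c) *: e k + (B *: w + vp)) ((A + c) *: e k).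
  apply: proj_ray; first by lra.
    by rewrite dotDl dotZl wk mulr0 vpk addr0.
  move=> i; rewrite dotDl dotZl; case: (eqVneq i k) => [->|ik].
    by rewrite wk vpk mulr0 addr0.
  rewrite wi // mulrN1; have := Bi i; lra.
have E : (A + c) *: e k + (B *: w + vp) = (A *: e k + B *: w) + v.
  by rewrite /vp scalerDl addrACA [c *: e k + _]addrC subrK.
rewrite E in P1.
have := iso _ _ _ _ _ P0 P1.
rewrite /leL addrC addKr scalerDl addrC addKr; apply.
by [].
Qed.

Lemma scale_pos c (x : vec) : convex_cone L -> L (c *: x) -> 0 < c -> L x.
Proof.
move=> [_ _ HZ] Lc c0.
have := HZ c^-1 _ _ Lc; rewrite scalerA mulVf ?gt_eqF // scale1r; apply.
by rewrite invr_ge0 ltW.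
Qed.

Lemma scale_neg c (x : vec) : convex_cone L -> L (c *: x) -> c < 0 -> L (- x).
Proof.
move=> cc Lc c0; apply: (@scale_pos (- c)) => //; last by rewrite oppr_gt0.
by rewrite scaleNr -scalerN opprK.
Qed.

End Aux.

Theorem proposition3 (R : realType) (m : nat) (e : 'I_m -> 'rV[R]_m)
    (L : 'rV[R]_m -> Prop) :
  lin_indep e -> proper_cone L ->
  isotone_projection_set L (cone_gen e) ->
  exists I : {set 'I_m},
    [/\ forall i j, i \in I -> j \in I -> 0 <= dot (e i) (e j),
        forall k l, k \notin I -> l \notin I -> 0 <= dot (e k) (e l) &
        forall i k, i \in I -> k \notin I -> dot (e i) (e k) <= 0].
Proof.
move=> li [_ cc pt gen] iso.
have dich k : L (e k) \/ L (- e k).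
  have n0 := nk_gt0 k li.
  have [x [y [Lx Ly exy]]] := gen (e k).
  have hn : dot (e k) (e k) = dot x (e k) - dot y (e k) by rewrite {1}exy dotBl.
  have sgn v : L v -> dot v (e k) != 0 -> L (e k) \/ L (- e k).
    move=> Lv nz; have Hk := key k li iso Lv.
    case: (ltgtP (dot v (e k) / dot (e k) (e k)) 0) => h.
    - by right; apply: scale_neg Hk h.
    - by left; apply: scale_pos Hk h.
    - by move: h => /eqP; rewrite mulf_eq0 invr_eq0 (negbTE nz) gt_eqF.
  case: (eqVneq (dot x (e k)) 0) => [hx|hx]; last exact: sgn Lx hx.
  case: (eqVneq (dot y (e k)) 0) => [hy|hy]; last exact: sgn Ly hy.
  by move: n0; rewrite hn hx hy subrr ltxx.
exists [set k | `[< L (e k) >]].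
have inI k : (k \in [set k | `[< L (e k) >]]) = `[< L (e k) >] by rewrite inE.
have notI k : k \notin [set k | `[< L (e k) >]] -> L (- e k).
  rewrite inI => /asboolPn nk; by case: (dich k).
split.
- move=> i j; rewrite !inI => /asboolP Li /asboolP Lj.
  rewrite leNgt; apply/negP => h.
  have := key j li iso Li.
  move=> H; have Lm := scale_neg cc H _.
  have : L (- e j).
    apply: Lm; rewrite pmulr_llt0 // invr_gt0; exact: nk_gt0.
  move=> Lmj; have := pt _ Lj Lmj => /eqP; apply/negP; exact: ek_neq0.
- move=> k l nk nl.
  have Lk := notI k nk.
  rewrite leNgt; apply/negP => h.
  have H := key l li iso Lk.
  rewrite dotNl in H.
  move: nl; rewrite inI => /asboolPn; apply.
  apply: scale_pos cc H _; rewrite pmulr_lgt0 ?invr_gt0 ?nk_gt0 //.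
  by rewrite oppr_gt0.
- move=> i k; rewrite inI => /asboolP Li nk.
  rewrite leNgt; apply/negP => h.
  have H := key k li iso Li.
  move: nk; rewrite inI => /asboolPn; apply.
  by apply: scale_pos cc H _; rewrite pmulr_lgt0 ?invr_gt0 ?nk_gt0.
Qed.
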